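(* Under the hypotheses of the preceding setting (random perfect matching $\mathbf M$ of two $n$-sets $V,W$; partitions $A_0,\dots,A_s$ of $V$ and $B_0,\dots,B_t$ of $W$ into nonempty parts with $s,t$ fixed, $a_i=|A_i|$, $b_j=|B_j|$; nonnegative integers $e_{ij}$ with $\sum_je_{ij}=a_i$, $\sum_ie_{ij}=b_j$; $\mu_{ij}=a_ib_j/n$, $e_{ij}=\mu_{ij}(1+\epsilon_{ij})$, $E_{ij}$ the number of edges of $\mathbf M$ between $A_i$ and $B_j$), there is a constant $C=C(s,t)$ such that \[\mathbb{P}\Big(\bigcap_{i,j}\{E_{ij}=e_{ij}\}\Big)\le C\Big(\prod_{1\le i\le s}a_i\prod_{1\le j\le t}b_j\Big)^{1/4}\exp\Big(-\sum_{i,j}\mu_{ij}\big[(1+\epsilon_{ij})\log(1+\epsilon_{ij})-\epsilon_{ij}\big]\Big),\] with the convention that the bracket equals $1$ when $\epsilon_{ij}=-1$.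
   Context: Logarithms are natural; $C$ does not depend on $n$ or on the sets. *)

(* Defs.v *)
From mathcomp Require Import all_boot perm.
From Stdlib Require Import Reals.

Set Implicit Arguments.
Unset Strict Implicit.
Unset Printing Implicit Defensive.

(* V = W = 'I_n.  A perfect matching between V and W is a bijection
   sg : {perm 'I_n} (v is matched to sg v); the random matching M is uniform.
   The partition A_0..A_s of V is given by the labelling A : 'I_n -> 'I_s.+1
   (A_i = [set v | A v == i]); similarly B for W. *)

Definition partsize (n k : nat) (A : 'I_n -> 'I_k) (i : 'I_k) : nat :=
  #|[set v | A v == i]|.

Definition Ecount (n s t : nat) (A : 'I_n -> 'I_s.+1) (B : 'I_n -> 'I_t.+1)
  (sg : {perm 'I_n}) (i : 'I_s.+1) (j : 'I_t.+1) : nat :=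
  #|[set v | (A v == i) && (B (sg v) == j)]|.

Definition prob_event (n s t : nat) (A : 'I_n -> 'I_s.+1) (B : 'I_n -> 'I_t.+1)
  (e : 'I_s.+1 -> 'I_t.+1 -> nat) : R :=
  (INR #|[set sg : {perm 'I_n} |
           [forall i, forall j, Ecount A B sg i j == e i j]]|
   / INR (n`!))%R.

Definition mu (n s t : nat) (A : 'I_n -> 'I_s.+1) (B : 'I_n -> 'I_t.+1)
  (i : 'I_s.+1) (j : 'I_t.+1) : R :=
  (INR (partsize A i) * INR (partsize B j) / INR n)%R.

Definition eps (n s t : nat) (A : 'I_n -> 'I_s.+1) (B : 'I_n -> 'I_t.+1)
  (e : 'I_s.+1 -> 'I_t.+1 -> nat) (i : 'I_s.+1) (j : 'I_t.+1) : R :=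
  (INR (e i j) / mu A B i j - 1)%R.

Definition bracket (x : R) : R :=
  if Req_EM_T x (-1)%R then 1%R else ((1 + x) * ln (1 + x) - x)%R.

Definition exponent_sum (n s t : nat) (A : 'I_n -> 'I_s.+1) (B : 'I_n -> 'I_t.+1)
  (e : 'I_s.+1 -> 'I_t.+1 -> nat) : R :=
  \big[Rplus/0%R]_(i < s.+1) \big[Rplus/0%R]_(j < t.+1)
     (mu A B i j * bracket (eps A B e i j))%R.

Definition size_prod (n s t : nat) (A : 'I_n -> 'I_s.+1) (B : 'I_n -> 'I_t.+1) : nat :=
  ((\prod_(i < s.+1 | i != ord0) partsize A i) *
   (\prod_(j < t.+1 | j != ord0) partsize B j))%N.

(* Main.v *)
Require Import Defs.
From mathcomp Require Import all_boot perm.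
From Stdlib Require Import Reals.
From mathcomp Require Import fingroup.
From Stdlib Require Import Lra Lia.
From HB Require Import structures.
Set Implicit Arguments.
Unset Strict Implicit.
Unset Printing Implicit Defensive.

Section Count.
Variables (n s t : nat) (A : 'I_n -> 'I_s.+1) (B : 'I_n -> 'I_t.+1)
  (e : 'I_s.+1 -> 'I_t.+1 -> nat).

Definition Fset := [set f : {ffun 'I_n -> 'I_t.+1} |
  [forall i, forall j, #|[set v | (A v == i) && (f v == j)]| == e i j]].

Lemma prod_by_class (k : nat) (l : 'I_n -> 'I_k) (G : 'I_k -> nat) :
  \prod_v G (l v) = \prod_i expn (G i) #|[set v | l v == i]|.
Proof.
rewrite (partition_big l xpredT) //=. apply: eq_bigr => i _.
rewrite (eq_bigr (fun _ => G i)); last by move=> v /eqP ->.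
rewrite prod_nat_const; congr (expn _ _); apply: eq_card => v; by rewrite inE.
Qed.

Lemma prod_on_F f : f \in Fset ->
  \prod_v e (A v) (f v) = \prod_i \prod_j expn (e i j) (e i j).
Proof.
rewrite inE => /forallP Hf.
pose l v := (A v, f v).
rewrite (partition_big l xpredT) //= pair_big /=. apply: eq_bigr => [[i j]] _ /=.
rewrite (eq_bigr (fun _ => e i j)); last by move=> v /eqP [<- <-].
rewrite prod_nat_const; congr (expn _ _).
have /forallP /(_ j) /eqP <- := Hf i.
apply: eq_card => v; rewrite !inE; by [].
Qed.

Lemma A1 : (forall i, \sum_j e i j = partsize A i) ->
  #|Fset| * \prod_i \prod_j expn (e i j) (e i j) <= \prod_i expn (partsize A i) (partsize A i).
Proof.
move=> Hrow.
have -> : \prod_i expn (partsize A i) (partsize A i) = \prod_v partsize A (A v).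
  by rewrite (@prod_by_class _ A (partsize A)).
have -> : \prod_v partsize A (A v) = \prod_v \sum_j e (A v) j.
  by apply: eq_bigr => v _; rewrite Hrow.
rewrite bigA_distr_bigA /= (bigID (fun f => f \in Fset)) /=.
apply: leq_trans (leq_addr _ _).
rewrite -sum_nat_const. rewrite leq_eqVlt; apply/orP; left; apply/eqP.
apply: eq_bigr => f Hf. by rewrite prod_on_F.
Qed.

End Count.
Section K.
Variables (n t : nat) (B : 'I_n -> 'I_t.+1).

Definition Kset := [set p : {perm 'I_n} | [forall w, B (p w) == B w]].

Definition rfun (p : {perm 'I_n}) (j : 'I_t.+1) : {ffun 'I_n -> 'I_n} :=
  [ffun w => if B w == j then p w else w].

Definition restr (p : {perm 'I_n}) j : {perm 'I_n} := insubd (1%g : {perm 'I_n}) (rfun p j).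

Lemma restrE p j w : p \in Kset -> restr p j w = if B w == j then p w else w.
Proof.
rewrite inE => /forallP Hp.
have Hinj : injectiveb (rfun p j).
  apply/injectiveP => x y; rewrite !ffunE.
  have Hx := eqP (Hp x); have Hy := eqP (Hp y).
  case: (B x =P j) => Ex; case: (B y =P j) => Ey.
  - exact: perm_inj.
  - by move=> Exy; case: Ey; rewrite -Exy Hx.
  - by move=> Exy; case: Ex; rewrite Exy Hy.
  - by [].
by rewrite -pvalE /restr insubdK // ffunE.
Qed.

Definition Tset := setXn (fun j : 'I_t.+1 => [set q : {perm 'I_n} | perm_on [set w | B w == j] q]).

Lemma card_Tset : #|Tset| = \prod_j (partsize B j)`!.
Proof.
rewrite cardsXn. apply: eq_bigr => j _.
rewrite -card_perm cardsE /partsize. by [].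
Qed.

Definition phi (p : {perm 'I_n}) : {dffun forall j : 'I_t.+1, {perm 'I_n}} :=
  [ffun j => restr p j].

Lemma A2 : #|Kset| <= \prod_j (partsize B j)`!.
Proof.
rewrite -card_Tset -(card_in_imset (f := phi)).
- apply: subset_leq_card. apply/subsetP => _ /imsetP [p Hp ->].
  apply/setXnP => j. rewrite inE ffunE. apply/subsetP => w; rewrite !inE restrE //.
  by case: (B w == j) => //; rewrite eqxx.
- move=> p1 p2 H1 H2 Heq. apply/permP => w.
  have := congr1 (fun F : {dffun forall j : 'I_t.+1, {perm 'I_n}} => (F (B w) : {perm 'I_n}) w) Heq. rewrite /= !ffunE !restrE // eqxx. by [].
Qed.

End K.

Section X.
Variables (n s t : nat) (A : 'I_n -> 'I_s.+1) (B : 'I_n -> 'I_t.+1)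
  (e : 'I_s.+1 -> 'I_t.+1 -> nat).

Definition Xset := [set sg : {perm 'I_n} | [forall i, forall j, Ecount A B sg i j == e i j]].

Definition fof (sg : {perm 'I_n}) : {ffun 'I_n -> 'I_t.+1} := [ffun v => B (sg v)].

Definition rep (f : {ffun 'I_n -> 'I_t.+1}) : {perm 'I_n} :=
  odflt 1%g [pick s0 in Xset | fof s0 == f].

Definition psi sg := (fof sg, ((rep (fof sg))^-1 * sg)%g).

Lemma fof_F sg : sg \in Xset -> fof sg \in Fset A e.
Proof.
rewrite !inE => /forallP H. apply/forallP => i; apply/forallP => j.
have /forallP /(_ j) /eqP <- := H i. rewrite /Ecount.
apply/eqP; apply: eq_card => v; by rewrite !inE ffunE.
Qed.

Lemma rep_spec sg : sg \in Xset -> fof (rep (fof sg)) = fof sg.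
Proof.
move=> Hsg; rewrite /rep. case: pickP => [r /andP [_ /eqP ->] | H] //=.
by have := H sg; rewrite Hsg eqxx.
Qed.

Lemma A3 : #|Xset| <= #|Fset A e| * #|Kset B|.
Proof.
rewrite -cardsX -(card_in_imset (f := psi)).
- apply: subset_leq_card. apply/subsetP => _ /imsetP [sg Hsg ->].
  rewrite /psi; apply/setXP; split; first exact: fof_F.
  rewrite inE; apply/forallP => w; rewrite permM.
  have := congr1 (fun F : {ffun 'I_n -> 'I_t.+1} => F ((rep (fof sg))^-1%g w)) (rep_spec Hsg).
  by rewrite /= !ffunE permKV => ->.
- move=> s1 s2 H1 H2 [Hf Hm]. rewrite Hf in Hm. exact: mulgI Hm.
Qed.

End X.

Lemma card_X_bound n s t (A : 'I_n -> 'I_s.+1) (B : 'I_n -> 'I_t.+1) e :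
  (forall i, \sum_j e i j = partsize A i) ->
  #|Xset A B e| * \prod_i \prod_j expn (e i j) (e i j) <=
  (\prod_i expn (partsize A i) (partsize A i)) * \prod_j (partsize B j)`!.
Proof.
move=> Hrow.
apply: leq_trans (leq_mul (A1 Hrow) (A2 B)).
rewrite mulnAC. apply: leq_mul (leqnn _). exact: A3.
Qed.

Lemma Ecount_inv n s t (A : 'I_n -> 'I_s.+1) (B : 'I_n -> 'I_t.+1) sg i j :
  Ecount B A (sg^-1)%g j i = Ecount A B sg i j.
Proof.
rewrite /Ecount -(card_preimset _ (@perm_inj _ sg)). apply: eq_card => v.
by rewrite !inE permK andbC.
Qed.

Lemma X_swap n s t (A : 'I_n -> 'I_s.+1) (B : 'I_n -> 'I_t.+1) e :
  #|Xset A B e| <= #|Xset B A (fun j i => e i j)|.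
Proof.
rewrite -(card_imset _ (@invg_inj _)). apply: subset_leq_card.
apply/subsetP => _ /imsetP [sg Hsg ->]. move: Hsg; rewrite !inE => /forallP H.
apply/forallP => j; apply/forallP => i. rewrite Ecount_inv.
by have /forallP /(_ j) := H i.
Qed.

Open Scope R_scope.
Unset Implicit Arguments.

Lemma incr_from_deriv (f f' : R -> R) (y : R) : 1 <= y ->
  (forall c, 1 <= c <= y -> derivable_pt_lim f c (f' c)) ->
  (forall c, 1 < c < y -> 0 <= f' c) -> f 1 <= f y.
Proof.
intros Hy Hd Hp. destruct (Rle_lt_or_eq_dec 1 y Hy) as [Hlt|Heq].
- destruct (MVT_cor2 f f' 1 y Hlt Hd) as [c [Hc1 Hc2]].
  assert (0 <= f' c * (y - 1)) by (apply Rmult_le_pos; [apply Hp; lra| lra]). lra.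
- subst; lra.
Qed.

Lemma ln_le_sub1 y : 0 < y -> ln y <= y - 1.
Proof.
intros Hy. assert (H := exp_ineq1_le (ln y)). rewrite (exp_ln y Hy) in H. lra.
Qed.

Lemma ln_ge_1_inv y : 0 < y -> 1 - / y <= ln y.
Proof.
intros Hy. assert (H := ln_le_sub1 (/ y) (Rinv_0_lt_compat _ Hy)).
rewrite (ln_Rinv y Hy) in H. lra.
Qed.

Lemma dlin a b x : derivable_pt_lim (fun y => a * y + b) x a.
Proof.
assert (H := derivable_pt_lim_plus _ _ x _ _
  (derivable_pt_lim_scal id a x 1 (derivable_pt_lim_id x))
  (derivable_pt_lim_const b x)).
unfold plus_fct, mult_real_fct, fct_cte, id in H. rewrite Rmult_1_r Rplus_0_r in H. exact H.
Qed.

Lemma L1 y : 1 <= y -> 2 * (y - 1) <= (y + 1) * ln y.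
Proof.
intros Hy.
set (f := fun y => (1 * y + 1) * ln y - (2 * y + -2)).
assert (Hf : f 1 <= f y).
{ apply (incr_from_deriv f (fun c => 1 * ln c + (1 * c + 1) * / c - 2)); [lra| |].
  - intros c Hc.
    apply (derivable_pt_lim_minus (fun y => (1*y+1) * ln y) (fun y => 2*y + -2)).
    + apply (derivable_pt_lim_mult (fun y => 1*y+1) ln). apply dlin.
      apply derivable_pt_lim_ln; lra.
    + apply dlin.
  - intros c Hc. assert (H := ln_ge_1_inv c ltac:(lra)).
    assert ((1 * c + 1) * / c = 1 + / c) by (field; lra). lra. }
unfold f in Hf. rewrite ln_1 in Hf. lra.
Qed.

Lemma L2a y : 1 <= y -> 4 * y * ln y <= 2 * y * y - 2.
Proof.
intros Hy.
set (f := fun y => (2 * y + 0) * (1 * y + 0) - 2 - (4 * y + 0) * ln y).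
assert (Hf : f 1 <= f y).
{ apply (incr_from_deriv f (fun c => (2 * (1 * c + 0) + (2 * c + 0) * 1 - 0) - (4 * ln c + (4 * c + 0) * / c))); [lra| |].
  - intros c Hc.
    apply (derivable_pt_lim_minus (fun y => (2*y+0)*(1*y+0)-2) (fun y => (4*y+0) * ln y)).
    + apply (derivable_pt_lim_minus (fun y => (2*y+0)*(1*y+0)) (fct_cte 2)).
      * apply (derivable_pt_lim_mult (fun y => 2*y+0) (fun y => 1*y+0)); apply dlin.
      * apply derivable_pt_lim_const.
    + apply (derivable_pt_lim_mult (fun y => 4*y+0) ln). apply dlin.
      apply derivable_pt_lim_ln; lra.
  - intros c Hc. assert (H := ln_le_sub1 c ltac:(lra)).
    assert ((4 * c + 0) * / c = 4) by (field; lra). lra. }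
unfold f in Hf. rewrite ln_1 in Hf. nra.
Qed.

Lemma L2 y : 1 <= y -> (4 * y + 2) * ln y <= (y - 1) * (y + 5).
Proof.
intros Hy.
set (f := fun y => (1 * y + -1) * (1 * y + 5) - (4 * y + 2) * ln y).
assert (Hf : f 1 <= f y).
{ apply (incr_from_deriv f (fun c => (1 * (1 * c + 5) + (1 * c + -1) * 1) - (4 * ln c + (4 * c + 2) * / c))); [lra| |].
  - intros c Hc.
    apply (derivable_pt_lim_minus (fun y => (1*y+-1)*(1*y+5)) (fun y => (4*y+2) * ln y)).
    + apply (derivable_pt_lim_mult (fun y => 1*y+-1) (fun y => 1*y+5)); apply dlin.
    + apply (derivable_pt_lim_mult (fun y => 4*y+2) ln). apply dlin.
      apply derivable_pt_lim_ln; lra.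
  - intros c Hc. assert (H := L2a c ltac:(lra)).
    assert ((4 * c + 2) * / c = 4 + 2 / c) by (field; lra).
    assert (4 * ln c <= 2 * c - 2 / c).
    { apply (Rmult_le_reg_l c); [lra|]. replace (c * (2 * c - 2 / c)) with (2*c*c-2) by (field; lra). lra. }
    lra. }
unfold f in Hf. rewrite ln_1 in Hf. nra.
Qed.

Lemma ln_mono x y : 0 < x -> x <= y -> ln x <= ln y.
Proof.
intros Hx Hxy. destruct (Rle_lt_or_eq_dec _ _ Hxy) as [H|H].
- left; apply ln_increasing; lra.
- subst; lra.
Qed.

Lemma ln_ge0 y : 1 <= y -> 0 <= ln y.
Proof. intros H. rewrite -ln_1. apply ln_mono; lra. Qed.


Definition ell (k : nat) : R :=
  ln (INR (k`!)) + INR k - INR k * ln (INR k) - / 2 * ln (INR k).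

Lemma INR_fact_pos k : 0 < INR (k`!).
Proof. apply lt_0_INR. apply/ltP. exact: fact_gt0. Qed.

Lemma ln_ratio_bounds (k : nat) : (1 <= k)%coq_nat ->
  1 <= (INR k + / 2) * (ln (INR k + 1) - ln (INR k)) <=
  1 + / (8 * INR k * (INR k + 1)).
Proof.
intros Hk. assert (Hk1 : 1 <= INR k) by (apply (le_INR 1); exact Hk).
set (y := (INR k + 1) / INR k).
assert (Hy : 1 <= y).
{ unfold y. apply (Rmult_le_reg_r (INR k)). lra. unfold Rdiv. rewrite Rmult_assoc Rinv_l; lra. }
assert (HD : ln y = ln (INR k + 1) - ln (INR k)).
{ unfold y, Rdiv. rewrite ln_mult; [|lra|apply Rinv_0_lt_compat; lra]. rewrite ln_Rinv; lra. }
rewrite <- HD. assert (H1 := L1 y Hy). assert (H2 := L2 y Hy). split.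
- assert (Hyk : y + 1 = (2 * INR k + 1) / INR k) by (unfold y; field; lra).
  assert (Hy1 : y - 1 = 1 / INR k) by (unfold y; field; lra).
  rewrite Hyk Hy1 in H1.
  apply (Rmult_le_reg_l (2 / INR k)). apply Rdiv_lt_0_compat; lra.
  replace (2 / INR k * ((INR k + / 2) * ln y)) with ((2 * INR k + 1) / INR k * ln y) by (field; lra).
  lra.
- assert (Hyk : 4 * y + 2 = (6 * INR k + 4) / INR k) by (unfold y; field; lra).
  assert (Hy1 : (y - 1) * (y + 5) = (6 * INR k + 1) / (INR k * INR k)) by (unfold y; field; lra).
  rewrite Hyk Hy1 in H2.
  assert (Hl : ln y <= (6 * INR k + 1) / (INR k * (6 * INR k + 4))).
  { apply (Rmult_le_reg_l ((6 * INR k + 4) / INR k)). apply Rdiv_lt_0_compat; lra.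
    replace ((6 * INR k + 4) / INR k * ((6 * INR k + 1) / (INR k * (6 * INR k + 4))))
      with ((6 * INR k + 1) / (INR k * INR k)) by (field; lra). lra. }
  assert (0 <= ln y) by (apply ln_ge0; lra).
  apply Rle_trans with ((INR k + / 2) * ((6 * INR k + 1) / (INR k * (6 * INR k + 4)))).
  + apply Rmult_le_compat_l; lra.
  + replace ((INR k + / 2) * ((6 * INR k + 1) / (INR k * (6 * INR k + 4))))
      with (1 + / (2 * INR k * (6 * INR k + 4))) by (field; lra).
    apply Rplus_le_compat_l. apply Rinv_le_contravar. 
    * apply Rmult_lt_0_compat; [|lra]. apply Rmult_lt_0_compat; lra.
    * nra.
Qed.

Lemma ell_step k : (1 <= k)%coq_nat ->
  ell k.+1 = ell k + 1 - (INR k + / 2) * (ln (INR k + 1) - ln (INR k)).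
Proof.
intros Hk. unfold ell. rewrite factS mult_INR S_INR.
assert (Hk1 : 1 <= INR k) by (apply (le_INR 1); exact Hk).
rewrite ln_mult; [| lra | apply INR_fact_pos]. ring.
Qed.

Lemma ell_bounds k : (1 <= k)%coq_nat -> 7/8 + / (8 * INR k) <= ell k <= 1.
Proof.
induction k as [|k IH]; intros Hk; [lia|].
destruct (Nat.eq_dec k 0) as [->|Hk0].
- unfold ell. replace (INR 1`!) with 1 by reflexivity. replace (INR 1) with 1 by reflexivity.
  rewrite ln_1. lra.
- assert (Hk' : (1 <= k)%coq_nat) by lia. specialize (IH Hk').
  rewrite (ell_step k Hk'). assert (Hb := ln_ratio_bounds k Hk').
  assert (Hk1 : 1 <= INR k) by (apply (le_INR 1); exact Hk').
  rewrite S_INR. split; [|lra].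
  assert (/ (8 * INR k) - / (8 * INR k * (INR k + 1)) = / (8 * (INR k + 1))) by (field; lra).
  lra.
Qed.


Set Implicit Arguments.

Lemma Rplus_assoc' : associative Rplus.
Proof. move=> x y z; ring. Qed.
HB.instance Definition _ := Monoid.isComLaw.Build R 0%R Rplus Rplus_assoc' Rplus_comm Rplus_0_l.

Open Scope R_scope.

Lemma INR_addn (m k : nat) : INR (m + k)%nat = INR m + INR k.
Proof. exact: plus_INR. Qed.
Lemma INR_muln (m k : nat) : INR (m * k)%nat = INR m * INR k.
Proof. exact: mult_INR. Qed.

Lemma INR_sum (I : Type) (r : seq I) (P : pred I) (F : I -> nat) :
  INR (\sum_(i <- r | P i) F i)%nat = \big[Rplus/0]_(i <- r | P i) INR (F i).
Proof. exact: (big_morph INR INR_addn). Qed.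

Lemma sumR_scal (I : Type) (r : seq I) (P : pred I) (F : I -> R) c :
  \big[Rplus/0]_(i <- r | P i) (c * F i) = c * \big[Rplus/0]_(i <- r | P i) F i.
Proof.
apply: (big_rec2 (fun x y => x = c * y)); first ring. by move=> i x y _ ->; ring.
Qed.

Lemma sumR_opp (I : Type) (r : seq I) (P : pred I) (F : I -> R) :
  \big[Rplus/0]_(i <- r | P i) (- F i) = - \big[Rplus/0]_(i <- r | P i) F i.
Proof.
apply: (big_rec2 (fun x y => x = - y)); first ring. by move=> i x y _ ->; ring.
Qed.

Lemma sumR_le (I : Type) (r : seq I) (P : pred I) (F G : I -> R) :
  (forall i, P i -> F i <= G i) ->
  \big[Rplus/0]_(i <- r | P i) F i <= \big[Rplus/0]_(i <- r | P i) G i.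
Proof.
move=> H. apply: (big_ind2 (fun x y => x <= y)); [lra| |exact: H].
move=> x1 x2 y1 y2 H1 H2; lra.
Qed.

Lemma sumR_const_ord k c : \big[Rplus/0]_(i < k) c = INR k * c.
Proof.
elim: k => [|k IH]; first by rewrite big_ord0 /=; ring.
rewrite big_ord_recr IH S_INR /=; ring.
Qed.

Lemma ln_prod (I : Type) (r : seq I) (P : pred I) (F : I -> nat) :
  (forall i, P i -> (0 < F i)%nat) ->
  ln (INR (\prod_(i <- r | P i) F i)%nat) = \big[Rplus/0]_(i <- r | P i) ln (INR (F i)).
Proof.
move=> Hp.
have [] : (0 < \prod_(i <- r | P i) F i)%nat /\
  ln (INR (\prod_(i <- r | P i) F i)%nat) = \big[Rplus/0]_(i <- r | P i) ln (INR (F i)); last by [].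
apply: (big_ind2 (fun x y => (0 < x)%nat /\ ln (INR x) = y)).
- split => //. by rewrite ln_1.
- move=> x1 x2 y1 y2 [Hx1 <-] [Hy1 <-]. split; first by rewrite muln_gt0 Hx1.
  rewrite INR_muln ln_mult //; apply: lt_0_INR; exact/ltP.
- by move=> i Hi; split; [exact: Hp|].
Qed.

Lemma INR_expn (m k : nat) : INR (expn m k) = INR m ^ k.
Proof.
elim: k => [|k IH]; first by [].

by rewrite expnS INR_muln IH.
Qed.

Definition xl (x : nat) : R := INR x * ln (INR x).

Lemma ln_selfpow (x : nat) : ln (INR (expn x x)) = xl x.
Proof.
rewrite /xl INR_expn. case: x => [|x]. by rewrite /= ln_1 Rmult_0_l.
rewrite ln_pow //. apply: lt_0_INR; lia.
Qed.

Lemma selfpow_gt0 (x : nat) : (0 < expn x x)%nat.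
Proof. case: x => [|x] //. by rewrite expn_gt0. Qed.

Lemma sum_partsize n k (l : 'I_n -> 'I_k) : (\sum_i partsize l i)%nat = n.
Proof.
rewrite -[RHS](card_ord n) -sum1_card (partition_big l xpredT) //=.
apply: eq_bigr => i _. rewrite sum1_card /partsize. apply: eq_card => v. by rewrite inE.
Qed.

Lemma term_eq (a b ee n : nat) : (0 < a)%nat -> (0 < b)%nat -> (0 < n)%nat ->
  let mu := INR a * INR b / INR n in
  mu * bracket (INR ee / mu - 1) =
  xl ee + (- (INR ee * ln (INR a)) + (- (INR ee * ln (INR b)) +
     (INR ee * ln (INR n) + (- INR ee + mu)))).
Proof.
move=> Ha Hb Hn mu.
have Ha' : 0 < INR a by apply: lt_0_INR; apply/ltP.
have Hb' : 0 < INR b by apply: lt_0_INR; apply/ltP.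
have Hn' : 0 < INR n by apply: lt_0_INR; apply/ltP.
have Hmu : 0 < mu by rewrite /mu; apply: Rdiv_lt_0_compat => //; apply: Rmult_lt_0_compat.
rewrite /bracket /xl. case: Req_EM_T => H /=.
- have He : INR ee = 0.
    have : INR ee / mu = 0 by lra.
    move=> H0. have := Rmult_eq_compat_r mu _ _ H0. rewrite Rmult_0_l /Rdiv Rmult_assoc Rinv_l; lra.
  rewrite He. ring.
- have He : 0 < INR ee.
    case: (ltnP 0 ee) => [Hlt|Hle]; first by apply: lt_0_INR; apply/ltP.
    have He0 : ee = 0%nat by apply/eqP; rewrite -leqn0.
    exfalso; apply: H. rewrite He0. change (INR 0) with 0. replace (0 / mu) with 0 by (field; lra). ring.
  have -> : 1 + (INR ee / mu - 1) = INR ee / mu by ring.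
  have Hl : ln (INR ee / mu) = ln (INR ee) - ln (INR a) - ln (INR b) + ln (INR n).
    have Hab : 0 < INR a * INR b * / INR n.
      apply: Rmult_lt_0_compat; [exact: Rmult_lt_0_compat|exact: Rinv_0_lt_compat].
    rewrite /mu /Rdiv (ln_mult _ _ He (Rinv_0_lt_compat _ Hab)) (ln_Rinv _ Hab)
      (ln_mult _ _ (Rmult_lt_0_compat _ _ Ha' Hb') (Rinv_0_lt_compat _ Hn'))
      (ln_mult _ _ Ha' Hb') (ln_Rinv _ Hn'). ring.
  rewrite Hl. field. lra.
Qed.

Lemma partsize_le n k (l : 'I_n -> 'I_k) i : (partsize l i <= n)%nat.
Proof. rewrite /partsize -[X in (_ <= X)%nat](card_ord n). exact: max_card. Qed.

Section Main.
Variables (n s t : nat) (A : 'I_n -> 'I_s.+1) (B : 'I_n -> 'I_t.+1)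
  (e : 'I_s.+1 -> 'I_t.+1 -> nat).
Hypothesis HA : forall i, (0 < partsize A i)%nat.
Hypothesis HB : forall j, (0 < partsize B j)%nat.
Hypothesis Hrow : forall i, (\sum_(j < t.+1) e i j)%nat = partsize A i.
Hypothesis Hcol : forall j, (\sum_(i < s.+1) e i j)%nat = partsize B j.

Lemma n_pos : (0 < n)%nat.
Proof. apply: leq_trans (HA ord0) _. rewrite /partsize -[X in (_ <= X)%nat](card_ord n). exact: max_card. Qed.

Lemma sum_INR_mul (I : Type) (r : seq I) (P : pred I) (F : I -> nat) c :
  \big[Rplus/0]_(i <- r | P i) (INR (F i) * c) = INR (\sum_(i <- r | P i) F i)%nat * c.
Proof.
rewrite INR_sum Rmult_comm -sumR_scal. apply: eq_bigr => i _; ring.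
Qed.

Definition Le := \big[Rplus/0]_(i < s.+1) \big[Rplus/0]_(j < t.+1) xl (e i j).
Definition La := \big[Rplus/0]_(i < s.+1) xl (partsize A i).
Definition Lb := \big[Rplus/0]_(j < t.+1) xl (partsize B j).

Lemma sumB : \big[Rplus/0]_(j < t.+1) INR (partsize B j) = INR n.
Proof. by rewrite -INR_sum sum_partsize. Qed.

Lemma ES : exponent_sum A B e = Le - La - Lb + xl n.
Proof.
have Hn := n_pos.
have Hn' : 0 < INR n by apply: lt_0_INR; apply/ltP.
rewrite /exponent_sum.
have Hterm : forall i j, mu A B i j * bracket (eps A B e i j) =
  xl (e i j) + (- (INR (e i j) * ln (INR (partsize A i))) + (- (INR (e i j) * ln (INR (partsize B j))) +
     (INR (e i j) * ln (INR n) + (- INR (e i j) + mu A B i j)))).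
  move=> i j. exact: (term_eq (e i j) (HA i) (HB j) Hn).
under eq_bigr => i _ do under eq_bigr => j _ do rewrite Hterm.
have Hi : forall i, \big[Rplus/0]_(j < t.+1) (xl (e i j) + (- (INR (e i j) * ln (INR (partsize A i))) + (- (INR (e i j) * ln (INR (partsize B j))) +
     (INR (e i j) * ln (INR n) + (- INR (e i j) + mu A B i j))))) =
  \big[Rplus/0]_(j < t.+1) xl (e i j) - xl (partsize A i)
   - \big[Rplus/0]_(j < t.+1) (INR (e i j) * ln (INR (partsize B j)))
   + INR (partsize A i) * ln (INR n).
  move=> i. rewrite !big_split /= !sumR_opp !sum_INR_mul Hrow.
  have -> : \big[Rplus/0]_(j < t.+1) INR (e i j) = INR (partsize A i) by rewrite -INR_sum Hrow.
  have -> : \big[Rplus/0]_(j < t.+1) mu A B i j = INR (partsize A i).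
    rewrite /mu. under eq_bigr => j _ do rewrite /Rdiv Rmult_assoc (Rmult_comm (INR (partsize B j))) -Rmult_assoc.
    rewrite sumR_scal sumB. field. lra.
  rewrite /xl. ring.
under eq_bigr => i _ do rewrite Hi.
rewrite /Rminus !big_split /= !sumR_opp.
have -> : \big[Rplus/0]_(i < s.+1) \big[Rplus/0]_(j < t.+1) (INR (e i j) * ln (INR (partsize B j))) = Lb.
  rewrite exchange_big /=. apply: eq_bigr => j _. by rewrite sum_INR_mul Hcol.
rewrite sum_INR_mul sum_partsize /Le /La /Lb /xl. reflexivity.
Qed.

Lemma ln_le_nat (x y : nat) : (0 < x)%nat -> (x <= y)%nat -> ln (INR x) <= ln (INR y).
Proof.
move=> Hx Hxy. apply: ln_mono. apply: lt_0_INR; exact/ltP. apply: le_INR; exact/leP.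
Qed.

Lemma ln_dprod (k l : nat) (F : 'I_k -> 'I_l -> nat) :
  ln (INR (\prod_(i < k) \prod_(j < l) expn (F i j) (F i j))%nat) =
  \big[Rplus/0]_(i < k) \big[Rplus/0]_(j < l) xl (F i j).
Proof.
rewrite ln_prod; last by move=> i _; apply: prodn_gt0 => j; exact: selfpow_gt0.
apply: eq_bigr => i _. rewrite ln_prod; last by move=> j _; exact: selfpow_gt0.
apply: eq_bigr => j _. exact: ln_selfpow.
Qed.

Lemma INR_pos (x : nat) : (0 < x)%nat -> 0 < INR x.
Proof. move=> H; apply: lt_0_INR; exact/ltP. Qed.

Lemma ln_mul_nat (x y : nat) : (0 < x)%nat -> (0 < y)%nat ->
  ln (INR (x * y)%nat) = ln (INR x) + ln (INR y).
Proof. move=> Hx Hy. rewrite INR_muln ln_mult //; exact: INR_pos. Qed.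

Lemma ln_selfprod (k : nat) (F : 'I_k -> nat) :
  ln (INR (\prod_(i < k) expn (F i) (F i))%nat) = \big[Rplus/0]_(i < k) xl (F i).
Proof.
rewrite ln_prod; last by move=> i _; exact: selfpow_gt0.
apply: eq_bigr => i _; exact: ln_selfpow.
Qed.

Lemma ln_factprod (k : nat) (F : 'I_k -> nat) :
  ln (INR (\prod_(i < k) (F i)`!)%nat) = \big[Rplus/0]_(i < k) ln (INR (F i)`!).
Proof. rewrite ln_prod //; move=> i _; exact: fact_gt0. Qed.

Lemma C1 : (0 < #|Xset A B e|)%nat ->
  ln (INR #|Xset A B e|) + Le <=
  La + \big[Rplus/0]_(j < t.+1) ln (INR (partsize B j)`!).
Proof.
move=> HX. have H := card_X_bound B Hrow.
have Hp : (0 < \prod_i \prod_j expn (e i j) (e i j))%nat.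
  apply: prodn_gt0 => i; apply: prodn_gt0 => j; exact: selfpow_gt0.
have Hpos : (0 < #|Xset A B e| * \prod_i \prod_j expn (e i j) (e i j))%nat.
  by rewrite muln_gt0 HX Hp.
have := ln_le_nat Hpos H.
rewrite ln_mul_nat // ln_dprod ln_mul_nat; last by apply: prodn_gt0 => j; exact: fact_gt0.
  by rewrite ln_selfprod ln_factprod.
apply: prodn_gt0 => i; exact: selfpow_gt0.
Qed.

Lemma C2 : (0 < #|Xset A B e|)%nat ->
  ln (INR #|Xset A B e|) + Le <=
  Lb + \big[Rplus/0]_(i < s.+1) ln (INR (partsize A i)`!).
Proof.
move=> HX. have H := card_X_bound A (e := fun j i => e i j) Hcol.
have H' := leq_trans (leq_mul (X_swap A B e) (leqnn _)) H.
have Hp : (0 < \prod_j \prod_i expn (e i j) (e i j))%nat.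
  apply: prodn_gt0 => i; apply: prodn_gt0 => j; exact: selfpow_gt0.
have Hpos : (0 < #|Xset A B e| * \prod_j \prod_i expn (e i j) (e i j))%nat.
  by rewrite muln_gt0 HX Hp.
have := ln_le_nat Hpos H'.
rewrite ln_mul_nat // (ln_dprod (fun j i => e i j)) ln_mul_nat; last by apply: prodn_gt0 => j; exact: fact_gt0.
  rewrite ln_selfprod ln_factprod exchange_big /=. by [].
apply: prodn_gt0 => i; exact: selfpow_gt0.
Qed.

Lemma ln_fact_eq (x : nat) :
  ln (INR x`!) = ell x - INR x + xl x + / 2 * ln (INR x).
Proof. rewrite /ell /xl. ring. Qed.

Lemma S_fact (k : nat) (x : 'I_k -> nat) : (forall i, (0 < x i)%nat) ->
  \big[Rplus/0]_(i < k) ln (INR (x i)`!) <=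
  INR k - INR (\sum_(i < k) x i)%nat + \big[Rplus/0]_(i < k) xl (x i)
   + / 2 * \big[Rplus/0]_(i < k) ln (INR (x i)).
Proof.
move=> Hx.
eapply Rle_trans.
  apply: (@sumR_le _ _ _ _ (fun i => 1 + (- INR (x i) + (xl (x i) + / 2 * ln (INR (x i)))))).
- move=> i _. rewrite ln_fact_eq.
  have := ell_bounds (x i) (ltac:(apply/leP; exact: Hx)). lra.
- rewrite !big_split /= sumR_opp sumR_scal sumR_const_ord INR_sum. lra.
Qed.

Lemma S_n : - INR n + xl n + / 2 * ln (INR n) <= ln (INR n`!).
Proof.
rewrite ln_fact_eq. have := ell_bounds n (ltac:(apply/leP; exact: n_pos)).
have : 0 < / (8 * INR n).
  apply: Rinv_0_lt_compat. have := INR_pos n_pos. lra.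
lra.
Qed.

Lemma ln_sp : ln (INR (size_prod A B)) + ln (INR (partsize A ord0)) + ln (INR (partsize B ord0)) =
  \big[Rplus/0]_(i < s.+1) ln (INR (partsize A i)) + \big[Rplus/0]_(j < t.+1) ln (INR (partsize B j)).
Proof.
rewrite /size_prod ln_mul_nat; try (apply: prodn_gt0 => i; exact: HA); try (apply: prodn_gt0 => i; exact: HB).
rewrite !ln_prod; try (move=> i _; exact: HA); try (move=> i _; exact: HB).
rewrite [X in _ = X + _](bigD1 ord0) //= [X in _ = _ + X](bigD1 ord0) //=. have E : forall x y a b : R, x + y + a + b = a + x + (b + y) by move=> *; ring. exact: E.
Qed.

Lemma main_log : (0 < #|Xset A B e|)%nat ->
  ln (INR #|Xset A B e|) - ln (INR n`!) + exponent_sum A B e <=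
  INR s + INR t + 2 + / 4 * ln (INR (size_prod A B)).
Proof.
move=> HX.
have H1 := C1 HX. have H2 := C2 HX.
have F1 := S_fact HB. have F2 := S_fact HA.
rewrite sum_partsize in F1. rewrite sum_partsize in F2.
have Sn := S_n. rewrite ES.
have Hsp := ln_sp.
have Ha0 : ln (INR (partsize A ord0)) <= ln (INR n) by apply: ln_le_nat; [exact: HA|exact: partsize_le].
have Hb0 : ln (INR (partsize B ord0)) <= ln (INR n) by apply: ln_le_nat; [exact: HB|exact: partsize_le].
rewrite !S_INR in F1 F2.
have := pos_INR s. have := pos_INR t.
rewrite /La /Lb in H1 H2 *. lra.
Qed.

End Main.

Lemma exp_mono x y : x <= y -> exp x <= exp y.
Proof. move=> H. case: (Rle_lt_or_eq_dec _ _ H) => [H'|->]; [left; exact: exp_increasing|lra]. Qed.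

Close Scope R_scope.

Theorem corollary4p2 :
  forall s t : nat, exists C : R,
  forall (n : nat) (A : 'I_n -> 'I_s.+1) (B : 'I_n -> 'I_t.+1)
         (e : 'I_s.+1 -> 'I_t.+1 -> nat),
    (forall i, 0 < partsize A i)%N ->
    (forall j, 0 < partsize B j)%N ->
    (forall i, \sum_(j < t.+1) e i j = partsize A i)%N ->
    (forall j, \sum_(i < s.+1) e i j = partsize B j)%N ->
    (prob_event A B e
       <= C * Rpower (INR (size_prod A B)) (1 / 4)
            * exp (- exponent_sum A B e))%R.
Proof.
move=> s t. exists (exp (INR s + INR t + 2)) => n A B e HA HB Hrow Hcol.
have Hn := n_pos HA.
have Hf : (0 < INR (n`!))%R by apply: INR_pos; exact: fact_gt0.
rewrite /prob_event -/(Xset A B e).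
case: (posnP #|Xset A B e|) => [->|HX].
- have : (0 < exp (INR s + INR t + 2) * Rpower (INR (size_prod A B)) (1 / 4) * exp (- exponent_sum A B e))%R.
    apply: Rmult_lt_0_compat; [apply: Rmult_lt_0_compat; [exact: exp_pos|rewrite /Rpower; exact: exp_pos]|exact: exp_pos].
  change (INR 0) with 0%R. rewrite /Rdiv Rmult_0_l. lra.
- have HL := main_log HA HB Hrow Hcol HX.
  have -> : (INR #|Xset A B e| / INR n`! = exp (ln (INR #|Xset A B e|) - ln (INR n`!)))%R.
    rewrite exp_plus exp_Ropp !exp_ln //. exact: INR_pos.
  rewrite /Rpower -!exp_plus. apply: exp_mono. lra.
Qed.
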